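(* If an atomic flow $A$ is normal for $\mathsf c$ and $A\to_{\mathsf w}^\star B$, then $B$ is normal for $\mathsf c$.
   Context: An atomic flow is a tuple $(V,E,\eta,up,lo)$: finite sets of vertices and edges, a labelling of vertices by interaction, cut, weakening, coweakening, contraction or cocontraction, and maps $up:E\to V\cup\{\top\}$, $lo:E\to V\cup\{\bot\}$. Upper edges of $\nu$: $lo(\epsilon)=\nu$; lower edges: $up(\epsilon)=\nu$. (Upper, lower) edge numbers: $(0,2)$ interaction, $(2,0)$ cut, $(0,1)$ weakening, $(1,0)$ coweakening, $(2,1)$ contraction, $(1,2)$ cocontraction; no directed cycles; there is $\pi:E\to\{+,-\}$ giving all edges of a (co)contraction the same sign and the two edges of an interaction/cut different signs. A flow is normal for $\mathsf c$ if none of the following patterns occurs in it: a contraction whose lower edge is an upper edge of a cut; an interaction one of whose lower edges is the upper edge of a cocontraction; a contraction whose lower edge is the upper edge of a cocontraction. $\to_{\mathsf w}^\star$ is the reflexive-transitive closure of $\to_{\mathsf w}$, where $A\to_{\mathsf w}B$ means $B$ results from $A$ by one of these subgraph replacements: (i) a weakening whose lower edge is an upper edge of a contraction: delete both, merging the contraction's other upper edge and its lower edge into one edge; (ii) a coweakening whose upper edge is a lower edge of a cocontraction: delete both, merging the cocontraction's upper edge and other lower edge; (iii) a weakening whose lower edge is an upper edge of a cut: delete both, the cut's other upper edge becoming the upper edge of a new coweakening; (iv) an interaction one of whose lower edges is the upper edge of a coweakening: delete both, the other lower edge becoming the lower edge of a new weakening; (v) an edge from a weakening to a coweakening: delete it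 and both vertices; (vi) a weakening whose lower edge is the upper edge of a cocontraction: replace by two new weakenings whose lower edges are the cocontraction's lower edges; (vii) a coweakening whose upper edge is the lower edge of a contraction: replace by two new coweakenings whose upper edges are the contraction's upper edges. *)

(* Defs.v *)
From mathcomp Require Import all_boot.
From Stdlib Require Import Relations.

Set Implicit Arguments.
Unset Strict Implicit.
Unset Printing Implicit Defensive.

Inductive kind := Int | Cut | Wk | Cowk | Ctr | Coctr.

(* Number of upper edges (lo e = v) and lower edges (up e = v) of each kind. *)
Definition n_upper (k : kind) : nat :=
  match k with Int => 0 | Cut => 2 | Wk => 0 | Cowk => 1 | Ctr => 2 | Coctr => 1 end.
Definition n_lower (k : kind) : nat :=
  match k with Int => 2 | Cut => 0 | Wk => 1 | Cowk => 0 | Ctr => 1 | Coctr => 2 end.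

(* A (pre)flow: vertex names, edge names, labelling, and the maps up, lo.
   [up e = None] means up(e) = top, [lo e = None] means lo(e) = bottom.
   Only the values of [lab] on [fV] and of [up], [lo] on [fE] are meaningful. *)
Record flow := Flow {
  fV : seq nat;
  fE : seq nat;
  lab : nat -> kind;
  up : nat -> option nat;
  lo : nat -> option nat }.

Definition vedge (A : flow) (v w : nat) : Prop :=
  exists e, e \in fE A /\ up A e = Some v /\ lo A e = Some w.

Definition is_flow (A : flow) : Prop :=
  [/\ uniq (fV A) /\ uniq (fE A),
    (forall e v, e \in fE A ->
        (up A e = Some v -> v \in fV A) /\ (lo A e = Some v -> v \in fV A)),
    (forall v, v \in fV A ->
        count (fun e => lo A e == Some v) (fE A) = n_upper (lab A v) /\
        count (fun e => up A e == Some v) (fE A) = n_lower (lab A v)),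
    (forall v, ~ clos_trans nat (vedge A) v v) &
    (exists pi : nat -> bool,
      forall v, v \in fV A ->
      [/\ (lab A v = Ctr \/ lab A v = Coctr) ->
            forall e1 e2, e1 \in fE A -> e2 \in fE A ->
            (up A e1 = Some v \/ lo A e1 = Some v) ->
            (up A e2 = Some v \/ lo A e2 = Some v) -> pi e1 = pi e2,
          lab A v = Int ->
            forall e1 e2, e1 \in fE A -> e2 \in fE A -> e1 <> e2 ->
            up A e1 = Some v -> up A e2 = Some v -> pi e1 <> pi e2 &
          lab A v = Cut ->
            forall e1 e2, e1 \in fE A -> e2 \in fE A -> e1 <> e2 ->
            lo A e1 = Some v -> lo A e2 = Some v -> pi e1 <> pi e2])].

Definition normal_c (A : flow) : Prop :=
  ~ exists v w e, [/\ v \in fV A /\ w \in fV A, e \in fE A,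
      up A e = Some v, lo A e = Some w &
      [\/ lab A v = Ctr /\ lab A w = Cut,
          lab A v = Int /\ lab A w = Coctr
        | lab A v = Ctr /\ lab A w = Coctr]].

Definition flow_eq (A B : flow) : Prop :=
  [/\ fV A =i fV B, fE A =i fE B,
      (forall v, v \in fV A -> lab A v = lab B v),
      (forall e, e \in fE A -> up A e = up B e) &
      (forall e, e \in fE A -> lo A e = lo B e)].

Definition drop_all (s r : seq nat) : seq nat := [seq x <- r | x \notin s].

(* The seven replacement rules.  Kept vertices/edges keep their names and data;
   new vertices/edges get arbitrary fresh names. *)
Definition wstep_raw (A B : flow) : Prop :=
  (* (i) weakening w above a contraction k: merge k's other upper edge f
         and its lower edge g into a new edge h *)
  (exists w k e f g h,
     ( w \in fV A /\ k \in fV A /\ lab A w = Wk /\ lab A k = Ctr /\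
         e \in fE A /\ up A e = Some w /\ lo A e = Some k /\
         f \in fE A /\ f <> e /\ lo A f = Some k /\
         ( g \in fE A /\ up A g = Some k /\
             h \notin drop_all [:: e; f; g] (fE A) /\
             flow_eq B (Flow (drop_all [:: w; k] (fV A))
                             (h :: drop_all [:: e; f; g] (fE A))
                             (lab A)
                             (fun x => if x == h then up A f else up A x)
                             (fun x => if x == h then lo A g else lo A x))))) \/
  (* (ii) coweakening w below a cocontraction k *)
  (exists w k e f g h,
     ( w \in fV A /\ k \in fV A /\ lab A w = Cowk /\ lab A k = Coctr /\
         e \in fE A /\ up A e = Some k /\ lo A e = Some w /\
         f \in fE A /\ lo A f = Some k /\
         ( g \in fE A /\ g <> e /\ up A g = Some k /\
             h \notin drop_all [:: e; f; g] (fE A) /\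
             flow_eq B (Flow (drop_all [:: w; k] (fV A))
                             (h :: drop_all [:: e; f; g] (fE A))
                             (lab A)
                             (fun x => if x == h then up A f else up A x)
                             (fun x => if x == h then lo A g else lo A x))))) \/
  (* (iii) weakening w above a cut k: k's other upper edge f now ends in a
           new coweakening n *)
  (exists w k e f n,
     ( w \in fV A /\ k \in fV A /\ lab A w = Wk /\ lab A k = Cut /\
         e \in fE A /\ up A e = Some w /\ lo A e = Some k /\
         f \in fE A /\ f <> e /\ lo A f = Some k /\
         n \notin drop_all [:: w; k] (fV A) /\
         flow_eq B (Flow (n :: drop_all [:: w; k] (fV A))
                         (drop_all [:: e] (fE A))
                         (fun x => if x == n then Cowk else lab A x)
                         (up A)
                         (fun x => if x == f then Some n else lo A x)))) \/
  (* (iv) interaction i above a coweakening k: i's other lower edge f now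
          starts at a new weakening n *)
  (exists i k e f n,
     ( i \in fV A /\ k \in fV A /\ lab A i = Int /\ lab A k = Cowk /\
         e \in fE A /\ up A e = Some i /\ lo A e = Some k /\
         f \in fE A /\ f <> e /\ up A f = Some i /\
         n \notin drop_all [:: i; k] (fV A) /\
         flow_eq B (Flow (n :: drop_all [:: i; k] (fV A))
                         (drop_all [:: e] (fE A))
                         (fun x => if x == n then Wk else lab A x)
                         (fun x => if x == f then Some n else up A x)
                         (lo A)))) \/
  (exists w k e,
     ( w \in fV A /\ k \in fV A /\ lab A w = Wk /\ lab A k = Cowk /\
         e \in fE A /\ up A e = Some w /\ lo A e = Some k /\
         flow_eq B (Flow (drop_all [:: w; k] (fV A))
                         (drop_all [:: e] (fE A))
                         (lab A) (up A) (lo A)))) \/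
  (* (vi) weakening w above a cocontraction k with lower edges f, g:
          two new weakenings n1, n2 *)
  (exists w k e f g n1 n2,
     ( w \in fV A /\ k \in fV A /\ lab A w = Wk /\ lab A k = Coctr /\
         e \in fE A /\ up A e = Some w /\ lo A e = Some k /\
         f \in fE A /\ g \in fE A /\
         ( f <> g /\ up A f = Some k /\ up A g = Some k /\
             n1 <> n2 /\ n1 \notin drop_all [:: w; k] (fV A) /\
             n2 \notin drop_all [:: w; k] (fV A) /\
             flow_eq B (Flow (n1 :: n2 :: drop_all [:: w; k] (fV A))
                             (drop_all [:: e] (fE A))
                             (fun x => if x == n1 then Wk
                                       else if x == n2 then Wk else lab A x)
                             (fun x => if x == f then Some n1
                                       else if x == g then Some n2 else up A x)
                             (lo A))))) \/
  (* (vii) coweakening w below a contraction k with upper edges f, g: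
           two new coweakenings n1, n2 *)
  (exists w k e f g n1 n2,
     ( w \in fV A /\ k \in fV A /\ lab A w = Cowk /\ lab A k = Ctr /\
         e \in fE A /\ up A e = Some k /\ lo A e = Some w /\
         f \in fE A /\ g \in fE A /\
         ( f <> g /\ lo A f = Some k /\ lo A g = Some k /\
             n1 <> n2 /\ n1 \notin drop_all [:: w; k] (fV A) /\
             n2 \notin drop_all [:: w; k] (fV A) /\
             flow_eq B (Flow (n1 :: n2 :: drop_all [:: w; k] (fV A))
                             (drop_all [:: e] (fE A))
                             (fun x => if x == n1 then Cowk
                                       else if x == n2 then Cowk else lab A x)
                             (up A)
                             (fun x => if x == f then Some n1
                                       else if x == g then Some n2 else lo A x))))).

Definition wstep (A B : flow) : Prop := [/\ is_flow A, is_flow B & wstep_raw A B].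

Definition wstar : relation flow := clos_refl_trans flow wstep.

(* Main.v *)
Require Import Defs.
From mathcomp Require Import all_boot.
From Stdlib Require Import Relations.

Lemma normal_eq (B C : flow) : flow_eq B C -> normal_c C -> normal_c B.
Proof.
move=> [EV EE Elab Eup Elo] nC [v [w [e [[Hv Hw] He Hu Hl Hb]]]].
apply: nC; exists v, w, e; split.
- by rewrite -EV -EV.
- by rewrite -EE.
- by rewrite -Eup.
- by rewrite -Elo.
- by rewrite -Elab // -Elab.
Qed.

Lemma mem_drop x s r : x \in drop_all s r -> x \in r.
Proof. by rewrite /drop_all mem_filter => /andP[]. Qed.

Lemma step_normal A B : wstep_raw A B -> normal_c A -> normal_c B.
Proof.
move=> H nA.
case: H => [|[|[|[|[|[]]]]]].
- move=> [w [k [e [f [g [h [Hw [Hk [Lw [Lk [He [Ue [Le [Hf [Hfe [Lf [Hg [Ug [Hh Heq]]]]]]]]]]]]]]]]]]].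
  move: Heq => /normal_eq; apply => -[v [w' [e' [[Hv Hw'] He' Hu Hl Hb]]]] /=.
  move: Hv Hw' He' Hu Hl Hb => /= /mem_drop Hv /mem_drop Hw'.
  rewrite in_cons; case: (eqVneq e' h) => [->|neh] /=.
  + rewrite ?eqxx => _ Hu Hl Hb; apply: nA; exists k, w', g; split => //.
    by case: Hb => -[_ ->]; rewrite Lk; [constructor 1|constructor 3|constructor 3].
  + move=> /mem_drop He' Hu Hl Hb.
    by apply: nA; exists v, w', e'.
- move=> [w [k [e [f [g [h [Hw [Hk [Lw [Lk [He [Ue [Le [Hf [Lf [Hg [Hge [Ug [Hh Heq]]]]]]]]]]]]]]]]]]].
  move: Heq => /normal_eq; apply => -[v [w' [e' [[Hv Hw'] He' Hu Hl Hb]]]] /=.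
  move: Hv Hw' He' Hu Hl Hb => /= /mem_drop Hv /mem_drop Hw'.
  rewrite in_cons; case: (eqVneq e' h) => [->|neh] /=.
  + rewrite ?eqxx => _ Hu Hl Hb; apply: nA; exists v, k, f; split => //.
    by case: Hb => -[-> _]; rewrite Lk; [constructor 3|constructor 2|constructor 3].
  + move=> /mem_drop He' Hu Hl Hb.
    by apply: nA; exists v, w', e'.
- move=> [w [k [e [f [n [Hw [Hk [Lw [Lk [He [Ue [Le [Hf [Hfe [Lf [Hn Heq]]]]]]]]]]]]]]]].
  move: Heq => /normal_eq; apply => -[v [w' [e' [[Hv Hw'] He' Hu Hl Hb]]]].
  move: Hv Hw' He' Hu Hl Hb => /=; rewrite !in_cons.
  case: (eqVneq v n) => [->|nv]; first by move=> _ _ _ _ _ [] [].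
  case: (eqVneq w' n) => [->|nw]; first by move=> _ _ _ _ _ [] [].
  move=> /= /mem_drop Hv /mem_drop Hw' /mem_drop He' Hu.
  case: (eqVneq e' f) => [_ [] /esym/eqP|nf Hl Hb]; first by rewrite (negbTE nw).
  by apply: nA; exists v, w', e'.
- move=> [w [k [e [f [n [Hw [Hk [Lw [Lk [He [Ue [Le [Hf [Hfe [Lf [Hn Heq]]]]]]]]]]]]]]]].
  move: Heq => /normal_eq; apply => -[v [w' [e' [[Hv Hw'] He' Hu Hl Hb]]]].
  move: Hv Hw' He' Hu Hl Hb => /=; rewrite !in_cons.
  case: (eqVneq v n) => [->|nv]; first by move=> _ _ _ _ _ [] [].
  case: (eqVneq w' n) => [->|nw]; first by move=> _ _ _ _ _ [] [].
  move=> /= /mem_drop Hv /mem_drop Hw' /mem_drop He'.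
  case: (eqVneq e' f) => [_ [] /esym/eqP|nf Hu Hl Hb]; first by rewrite (negbTE nv).
  by apply: nA; exists v, w', e'.
- move=> [w [k [e [Hw [Hk [Lw [Lk [He [Ue [Le Heq]]]]]]]]]].
  move: Heq => /normal_eq; apply => -[v [w' [e' [[Hv Hw'] He' Hu Hl Hb]]]].
  move: Hv Hw' He' Hu Hl Hb => /= /mem_drop Hv /mem_drop Hw' /mem_drop He' Hu Hl Hb.
  by apply: nA; exists v, w', e'.
- move=> [w [k [e [f [g [n1 [n2 [Hw [Hk [Lw [Lk [He [Ue [Le [Hf [Hg [Hfg [Uf [Ug [Hn12 [Hn1 [Hn2 Heq]]]]]]]]]]]]]]]]]]]]]].
  move: Heq => /normal_eq; apply => -[v [w' [e' [[Hv Hw'] He' Hu Hl Hb]]]].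
  move: Hv Hw' He' Hu Hl Hb => /=; rewrite !in_cons.
  case: (eqVneq v n1) => [->|nv1]; first by move=> _ _ _ _ _ [] [].
  case: (eqVneq v n2) => [->|nv2]; first by rewrite ?eqxx; move=> _ _ _ _ _ [] [].
  case: (eqVneq w' n1) => [->|nw1]; first by rewrite ?eqxx; move=> _ _ _ _ _ [] [].
  case: (eqVneq w' n2) => [->|nw2]; first by rewrite ?eqxx; move=> _ _ _ _ _ [] [].
  move=> /= /mem_drop Hv /mem_drop Hw' /mem_drop He'.
  case: (eqVneq e' f) => [_ [] /esym/eqP|nf]; first by rewrite (negbTE nv1).
  case: (eqVneq e' g) => [_ [] /esym/eqP|ng Hu Hl Hb]; first by rewrite (negbTE nv2).
  by apply: nA; exists v, w', e'.
- move=> [w [k [e [f [g [n1 [n2 [Hw [Hk [Lw [Lk [He [Ue [Le [Hf [Hg [Hfg [Uf [Ug [Hn12 [Hn1 [Hn2 Heq]]]]]]]]]]]]]]]]]]]]]].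
  move: Heq => /normal_eq; apply => -[v [w' [e' [[Hv Hw'] He' Hu Hl Hb]]]].
  move: Hv Hw' He' Hu Hl Hb => /=; rewrite !in_cons.
  case: (eqVneq v n1) => [->|nv1]; first by move=> _ _ _ _ _ [] [].
  case: (eqVneq v n2) => [->|nv2]; first by rewrite ?eqxx; move=> _ _ _ _ _ [] [].
  case: (eqVneq w' n1) => [->|nw1]; first by rewrite ?eqxx; move=> _ _ _ _ _ [] [].
  case: (eqVneq w' n2) => [->|nw2]; first by rewrite ?eqxx; move=> _ _ _ _ _ [] [].
  move=> /= /mem_drop Hv /mem_drop Hw' /mem_drop He' Hu.
  case: (eqVneq e' f) => [_ [] /esym/eqP|nf]; first by rewrite (negbTE nw1).
  case: (eqVneq e' g) => [_ [] /esym/eqP|ng Hl Hb]; first by rewrite (negbTE nw2).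
  by apply: nA; exists v, w', e'.
Qed.

Theorem proposition4p19 (A B : flow) :
  is_flow A -> normal_c A -> wstar A B -> normal_c B.
Proof.
move=> _ nA H; elim: H nA => [x y [_ _ S]|x|x y z _ IH1 _ IH2] n.
- exact: step_normal S n.
- exact: n.
- exact: IH2 (IH1 n).
Qed.
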